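(* Let $s\in\mathbb C$ with $\Re s<0$ and let $w(x)=e^{s/x}$ for $x>0$, $w(0)=0$. Then for every $\sigma>-\Re s$, $\sup_{k\in\mathbb N}\sup_{x\in[0,\infty)}\frac{\sigma^k}{(k!)^2}\Big|\frac{d^k w}{dx^k}(x)\Big|=\infty.$ *)

(* Defs.v *)
(* classical reals. A complex number s = a + i b is encoded
   by its real and imaginary parts; complex-valued functions by pairs of
   real-valued functions. *)
From Stdlib Require Import Reals.
Open Scope R_scope.

(* w(x) = e^{s/x} for x > 0, w(0) = 0 (and extended by 0 for x < 0, which
   is irrelevant: only x >= 0 is ever used).  With s = a + i b,
   e^{s/x} = e^{a/x} (cos (b/x) + i sin (b/x)). *)
Definition w_re (a b x : R) : R :=
  if Rlt_dec 0 x then exp (a / x) * cos (b / x) else 0.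
Definition w_im (a b x : R) : R :=
  if Rlt_dec 0 x then exp (a / x) * sin (b / x) else 0.

Definition cmod (u v : R) : R := sqrt (u * u + v * v).

(* l is the derivative at x of f regarded as a function on [0, +oo)
   (one-sided at x = 0, ordinary derivative at x > 0). *)
Definition deriv_nonneg (f : R -> R) (x l : R) : Prop :=
  forall eps : R, 0 < eps -> exists delta : R, 0 < delta /\
    forall h : R, h <> 0 -> Rabs h < delta -> 0 <= x + h ->
      Rabs ((f (x + h) - f x) / h - l) < eps.

(* Main.v *)
Require Import Defs.
From Stdlib Require Import Reals Lra Lia Classical.
From Coquelicot Require Import Coquelicot.
Open Scope R_scope.

Lemma dn_cont (g : R -> R) (y l : R) : 0 <= y -> deriv_nonneg g y l ->
  continuity_pt (fun t => g (Rmax 0 t)) y.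
Proof.
  intros Hy Hd.
  unfold continuity_pt, continue_in, limit1_in, limit_in, dist; simpl; unfold R_dist.
  intros eps Heps.
  destruct (Hd 1 Rlt_0_1) as [d [Hd0 Hdd]].
  assert (Hl : 0 < Rabs l + 1) by (pose proof (Rabs_pos l); lra).
  exists (Rmin d (eps / (Rabs l + 1))). split.
  { apply Rmin_pos; [lra|]. apply Rdiv_lt_0_compat; lra. }
  intros t [_ Ht].
  assert (Hm1 := Rmin_l d (eps / (Rabs l + 1))).
  assert (Hm2 := Rmin_r d (eps / (Rabs l + 1))).
  rewrite (Rmax_right 0 y Hy).
  set (s := Rmax 0 t).
  assert (Hs : Rabs (s - y) <= Rabs (t - y) /\ 0 <= s).
  { unfold s. destruct (Rle_dec t 0).
    - rewrite Rmax_left by lra. split; [|lra].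
      rewrite Rabs_left1 by lra. rewrite Rabs_left1 by lra. lra.
    - rewrite Rmax_right by lra. split; lra. }
  destruct Hs as [Hs Hs0].
  destruct (Req_dec s y) as [E|E].
  { rewrite E. replace (g y - g y) with 0 by ring. rewrite Rabs_R0. lra. }
  set (h := s - y).
  assert (Hh : h <> 0) by (unfold h; lra).
  assert (Hq := Hdd h Hh ltac:(unfold h; lra) ltac:(unfold h; lra)).
  replace (y + h) with s in Hq by (unfold h; ring).
  set (q := (g s - g y) / h) in Hq.
  assert (Hq2 : Rabs q <= Rabs l + 1).
  { replace q with ((q - l) + l) by ring. pose proof (Rabs_triang (q - l) l). lra. }
  replace (g s - g y) with (q * h) by (unfold q; field; exact Hh).
  rewrite Rabs_mult.
  assert (Hh2 : Rabs h < eps / (Rabs l + 1)) by (unfold h; lra).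
  apply Rle_lt_trans with ((Rabs l + 1) * Rabs h).
  { apply Rmult_le_compat_r; [apply Rabs_pos| exact Hq2]. }
  apply Rmult_lt_reg_r with (/ (Rabs l + 1)).
  { apply Rinv_0_lt_compat; lra. }
  replace ((Rabs l + 1) * Rabs h * / (Rabs l + 1)) with (Rabs h) by (field; lra).
  exact Hh2.
Qed.

Lemma dn_der (g : R -> R) (y l : R) : 0 < y -> deriv_nonneg g y l ->
  is_derive (fun t => g (Rmax 0 t)) y l.
Proof.
  intros Hy Hd. apply is_derive_Reals.
  intros eps Heps.
  destruct (Hd eps Heps) as [d [Hd0 Hdd]].
  assert (Hp : 0 < Rmin d y) by (apply Rmin_pos; lra).
  exists (mkposreal _ Hp). intros h Hh Hh2. simpl in Hh2.
  assert (Hm1 := Rmin_l d y). assert (Hm2 := Rmin_r d y).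
  assert (Ha : Rabs h < y) by lra.
  assert (0 < y + h) by (destruct (Rabs_def2 _ _ Ha); lra).
  rewrite (Rmax_right 0 y) by lra. rewrite (Rmax_right 0 (y + h)) by lra.
  apply Hdd; lra.
Qed.

Lemma der_dn (g : R -> R) (y l : R) : is_derive g y l -> deriv_nonneg g y l.
Proof.
  intros H. apply is_derive_Reals in H.
  intros eps Heps. destruct (H eps Heps) as [d Hd].
  exists d. split; [apply cond_pos|]. intros h Hh Hh2 _. apply Hd; auto.
Qed.

Lemma MVT_nn (f f' G G' : R -> R) (x : R) : 0 <= x ->
  (forall y, 0 <= y -> deriv_nonneg f y (f' y)) ->
  (forall y, is_derive G y (G' y)) ->
  exists c, 0 <= c <= x /\ (f x - G x) - (f 0 - G 0) = (f' c - G' c) * x.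
Proof.
  intros Hx Hf HG.
  destruct (Req_dec x 0) as [E|E].
  { exists 0. subst x. split; [lra|ring]. }
  set (H := fun t => f (Rmax 0 t) - G (Rmax 0 t)).
  destruct (MVT_gen H 0 x (fun t => f' t - G' t)) as [c [Hc Hc2]].
  - intros y Hy. rewrite Rmin_left in Hy by lra. rewrite Rmax_right in Hy by lra.
    unfold H.
    assert (K1 : is_derive (fun t => f (Rmax 0 t)) y (f' y)).
    { apply dn_der; [lra|]. apply Hf; lra. }
    assert (K2 : is_derive (fun t => G (Rmax 0 t)) y (G' y)).
    { apply dn_der; [lra|]. apply der_dn. apply HG. }
    exact (is_derive_minus _ _ _ _ _ K1 K2).
  - intros y Hy. rewrite Rmin_left in Hy by lra. rewrite Rmax_right in Hy by lra.
    unfold H. apply (continuity_pt_minus (fun t => f (Rmax 0 t)) (fun t => G (Rmax 0 t))).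
    + apply dn_cont with (f' y); [lra|]. apply Hf; lra.
    + apply dn_cont with (G' y); [lra|]. apply der_dn. apply HG.
  - rewrite Rmin_left in Hc by lra. rewrite Rmax_right in Hc by lra.
    exists c. split; [exact Hc|].
    unfold H in Hc2. rewrite (Rmax_right 0 x) in Hc2 by lra.
    rewrite (Rmax_left 0 0) in Hc2 by lra. lra.
Qed.

Definition T (i : nat) (y : R) : R := y ^ i / INR (Factorial.fact i).

Lemma T_der i y : is_derive (T (S i)) y (T i y).
Proof.
  assert (K := is_derive_scal _ y (/ INR (Factorial.fact (S i))) _
     (is_derive_pow (fun t => t) (S i) y 1 (is_derive_id y))).
  apply (is_derive_ext (fun t : R => / INR (Factorial.fact (S i)) * (t ^ S i)) (T (S i))).
  { intros t. unfold T, Rdiv. apply Rmult_comm. }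
  replace (T i y) with (/ INR (Factorial.fact (S i)) * (INR (S i) * 1 * y ^ Init.Nat.pred (S i))).
  { exact K. }
  unfold T. simpl Init.Nat.pred. rewrite fact_simpl. rewrite mult_INR.
  pose proof (INR_fact_neq_0 i). assert (INR (S i) <> 0) by (apply not_0_INR; lia).
  field. auto.
Qed.

Lemma T0 y : T 0 y = 1.
Proof. unfold T. simpl. field. Qed.
Lemma T1 y : T 1 y = y.
Proof. unfold T. simpl. field. Qed.
Lemma TS0 i : T (S i) 0 = 0.
Proof. unfold T. simpl. unfold Rdiv. ring. Qed.
Lemma T_nonneg i y : 0 <= y -> 0 <= T i y.
Proof. intros. unfold T. apply Rdiv_le_0_compat. apply pow_le; auto. apply INR_fact_lt_0. Qed.

Lemma Lbound (f f' P P' E E' : R -> R) (x : R) : 0 <= x ->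
  (forall y, 0 <= y -> deriv_nonneg f y (f' y)) ->
  (forall y, is_derive P y (P' y)) -> (forall y, is_derive E y (E' y)) ->
  (forall y, 0 <= y <= x -> Rabs (f' y - P' y) <= E' y) ->
  Rabs (f x - f 0 - (P x - P 0)) <= E x - E 0.
Proof.
  intros Hx Hf HP HE Hb.
  destruct (MVT_nn f f' (fun y => P y + E y) (fun y => P' y + E' y) x Hx Hf)
    as [c1 [Hc1 E1]].
  { intros y. exact (is_derive_plus _ _ _ _ _ (HP y) (HE y)). }
  destruct (MVT_nn f f' (fun y => P y - E y) (fun y => P' y - E' y) x Hx Hf)
    as [c2 [Hc2 E2]].
  { intros y. exact (is_derive_minus _ _ _ _ _ (HP y) (HE y)). }
  assert (B1 := Hb c1 Hc1). assert (B2 := Hb c2 Hc2).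
  assert (C1 : f' c1 - P' c1 <= E' c1) by (pose proof (Rle_abs (f' c1 - P' c1)); lra).
  assert (C2 : - E' c2 <= f' c2 - P' c2).
  { pose proof (Rle_abs (- (f' c2 - P' c2))). rewrite Rabs_Ropp in H. lra. }
  apply Rabs_le; split.
  - assert (0 <= (f' c2 - (P' c2 - E' c2)) * x) by (apply Rmult_le_pos; lra). lra.
  - assert ((f' c1 - (P' c1 + E' c1)) * x <= 0).
    { apply Rmult_le_0_r; lra. } lra.
Qed.

Lemma taylor (F : nat -> R -> R)
  (HS : forall k x, 0 <= x -> deriv_nonneg (F k) x (F (S k) x))
  (n : nat) (c C : R) (Hflat : forall j, (j < n)%nat -> F j 0 = 0)
  (Htop : forall x, 0 <= x -> Rabs (F n x - c) <= C * x) :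
  forall i, (i <= n)%nat -> forall x, 0 <= x ->
    Rabs (F (n - i)%nat x - c * T i x) <= C * T (S i) x.
Proof.
  induction i as [|i IH]; intros Hi x Hx.
  - rewrite Nat.sub_0_r, T0, T1, Rmult_1_r. auto.
  - assert (Hfl : F (n - S i)%nat 0 = 0) by (apply Hflat; lia).
    assert (Hd : forall y, 0 <= y -> deriv_nonneg (F (n - S i)%nat) y (F (n - i)%nat y)).
    { intros y Hy. replace (n - i)%nat with (S (n - S i)) by lia. apply HS; auto. }
    assert (K := Lbound (F (n - S i)%nat) (F (n - i)%nat)
      (fun y => c * T (S i) y) (fun y => c * T i y)
      (fun y => C * T (S (S i)) y) (fun y => C * T (S i) y) x Hx Hd).
    rewrite Hfl, !TS0 in K.
    replace (F (n - S i)%nat x - 0 - (c * T (S i) x - c * 0))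
      with (F (n - S i)%nat x - c * T (S i) x) in K by ring.
    replace (C * T (S (S i)) x - C * 0) with (C * T (S (S i)) x) in K by ring.
    apply K.
    + intros y. apply is_derive_scal. apply T_der.
    + intros y. apply is_derive_scal. apply T_der.
    + intros y Hy. apply IH; [lia|lra].
Qed.

Lemma exp_ge_pow t N : 0 <= t -> t ^ N / INR (Factorial.fact N) <= exp t.
Proof.
  intros Ht. eapply Rle_trans; [|apply (exp_ge_taylor t N Ht)].
  destruct N as [|m].
  - simpl. lra.
  - rewrite tech5.
    assert (0 <= sum_f_R0 (fun k => t ^ k / INR (Factorial.fact k)) m).
    { apply cond_pos_sum. intros k. apply Rdiv_le_0_compat; [apply pow_le; auto|apply INR_fact_lt_0]. }
    lra.
Qed.

Lemma exp_small a N x : a < 0 -> 0 < x ->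
  exp (a / x) <= INR (Factorial.fact N) / (- a) ^ N * x ^ N.
Proof.
  intros Ha Hx.
  assert (Ht : 0 <= - a / x) by (apply Rdiv_le_0_compat; lra).
  assert (H := exp_ge_pow _ N Ht).
  assert (Hf := INR_fact_lt_0 N).
  assert (Hp : 0 < (-a) ^ N) by (apply pow_lt; lra).
  assert (Hxn : 0 < x ^ N) by (apply pow_lt; lra).
  assert (E1 : exp (a / x) * exp (- a / x) = 1).
  { rewrite <- exp_plus. replace (a / x + - a / x) with 0 by (field; lra). apply exp_0. }
  assert (E2 : (- a / x) ^ N * x ^ N = (- a) ^ N).
  { rewrite <- Rpow_mult_distr. f_equal. field. lra. }
  assert (H2 : (- a / x) ^ N <= INR (Factorial.fact N) * exp (- a / x)).
  { apply Rmult_le_reg_r with (/ INR (Factorial.fact N)). apply Rinv_0_lt_compat; lra.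
    replace (INR (Factorial.fact N) * exp (- a / x) * / INR (Factorial.fact N)) with (exp (-a/x)) by (field; lra).
    exact H. }
  assert (He : 0 < exp (a / x)) by apply exp_pos.
  apply Rmult_le_reg_r with ((-a) ^ N); auto.
  replace (INR (Factorial.fact N) / (- a) ^ N * x ^ N * (- a) ^ N) with (INR (Factorial.fact N) * x ^ N) by (field; lra).
  rewrite <- E2.
  replace (INR (Factorial.fact N) * x ^ N) with (exp (a / x) * (INR (Factorial.fact N) * exp (- a / x)) * x ^ N)
    by (replace (exp (a / x) * (INR (Factorial.fact N) * exp (- a / x))) with (INR (Factorial.fact N) * (exp (a/x) * exp (-a/x))) by ring; rewrite E1; ring).
  rewrite <- Rmult_assoc.
  apply Rmult_le_compat_r; [lra|].
  apply Rmult_le_compat_l; lra.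
Qed.

Lemma exp_INR_mult n x : exp (INR n * x) = exp x ^ n.
Proof.
  induction n as [|n IH].
  - simpl. rewrite Rmult_0_l. apply exp_0.
  - rewrite S_INR. replace ((INR n + 1) * x) with (INR n * x + x) by ring.
    rewrite exp_plus, IH. simpl. ring.
Qed.

Lemma e_step (k : R) : 0 < k -> forall n, INR n = k ->
  exp 1 * k ^ (S n) <= (k + 1) ^ (S n).
Proof.
  intros Hk n Hn.
  set (v := / (k + 1)).
  assert (Hv : exp (- v) >= 1 - v).
  { pose proof (exp_ineq1_le (- v)). lra. }
  assert (Hv2 : 1 - v = k / (k + 1)) by (unfold v; field; lra).
  assert (Hkk : 0 < k / (k + 1)) by (apply Rdiv_lt_0_compat; lra).
  assert (H1 : exp v <= (k + 1) / k).
  { rewrite <- (Ropp_involutive v), exp_Ropp.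
    rewrite <- (Rinv_div k (k + 1)). apply Rinv_le_contravar; lra. }
  assert (H2 : exp 1 = exp v ^ S n).
  { rewrite <- exp_INR_mult. f_equal. rewrite S_INR, Hn. unfold v. field. lra. }
  rewrite H2, <- Rpow_mult_distr.
  apply pow_incr. split.
  - pose proof (exp_pos v). pose proof (pow_lt k (S n)). apply Rmult_le_pos; lra.
  - apply Rmult_le_reg_r with (/ k). apply Rinv_0_lt_compat; lra.
    replace (exp v * k * / k) with (exp v) by (field; lra).
    replace ((k + 1) * / k) with ((k + 1) / k) by (field; lra). exact H1.
Qed.

Lemma stirling_up k : (1 <= k)%nat ->
  INR (Factorial.fact k) * exp (INR k) <= exp 1 * INR k * INR k ^ k.
Proof.
  induction k as [|k IH]; intros Hk; [lia|].
  destruct (Nat.eq_dec k 0) as [E|E].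
  { subst k. simpl. lra. }
  assert (IH' := IH ltac:(lia)).
  assert (Hk0 : 0 < INR k) by (apply lt_0_INR; lia).
  assert (Hs := e_step (INR k) Hk0 k eq_refl).
  rewrite fact_simpl, mult_INR, S_INR, exp_plus.
  assert (Hf := INR_fact_lt_0 k).
  assert (He := exp_pos 1).
  assert (Hp := pow_lt (INR k) k Hk0).
  replace ((INR k + 1) * INR (Factorial.fact k) * (exp (INR k) * exp 1))
    with ((INR k + 1) * exp 1 * (INR (Factorial.fact k) * exp (INR k))) by ring.
  apply Rle_trans with ((INR k + 1) * exp 1 * (exp 1 * INR k * INR k ^ k)).
  { apply Rmult_le_compat_l; [nra|exact IH']. }
  replace ((INR k + 1) * exp 1 * (exp 1 * INR k * INR k ^ k))
    with (exp 1 * (INR k + 1) * (exp 1 * INR k ^ S k)) by (simpl; ring).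
  replace (exp 1 * (INR k + 1) * (INR k + 1) ^ S k)
    with (exp 1 * (INR k + 1) * (INR k + 1) ^ S k) by ring.
  apply Rmult_le_compat_l; [nra|exact Hs].
Qed.

Lemma top (F : nat -> R -> R)
  (HS : forall k x, 0 <= x -> deriv_nonneg (F k) x (F (S k) x))
  (Bd : nat -> R) (Hb : forall k x, 0 <= x -> Rabs (F k x) <= Bd k) (n : nat) :
  forall x, 0 <= x -> Rabs (F n x - F n 0) <= Bd (S n) * x.
Proof.
  intros x Hx.
  assert (K := Lbound (F n) (F (S n)) (fun y => 0 * T 1 y) (fun y => 0 * T 0 y)
     (fun y => Bd (S n) * T 1 y) (fun y => Bd (S n) * T 0 y) x Hx (HS n)).
  simpl in K.
  assert (K' : Rabs (F n x - F n 0 - (0 * T 1 x - 0 * T 1 0)) <= Bd (S n) * T 1 x - Bd (S n) * T 1 0).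
  { apply K.
  - intros y. apply is_derive_scal. apply T_der.
  - intros y. apply is_derive_scal. apply T_der.
  - intros y Hy. rewrite T0. replace (F (S n) y - 0 * 1) with (F (S n) y) by ring.
    rewrite Rmult_1_r. apply Hb. lra. }
  rewrite !T1 in K'.
  replace (F n x - F n 0 - (0 * x - 0 * 0)) with (F n x - F n 0) in K' by ring.
  replace (Bd (S n) * x - Bd (S n) * 0) with (Bd (S n) * x) in K' by ring.
  exact K'.
Qed.

Lemma generic (a : R) (ha : a < 0) (F : nat -> R -> R)
  (HS : forall k x, 0 <= x -> deriv_nonneg (F k) x (F (S k) x))
  (Bd : nat -> R) (Hb : forall k x, 0 <= x -> Rabs (F k x) <= Bd k)
  (Hw : forall x, 0 < x -> Rabs (F 0%nat x) <= exp (a / x))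
  (H00 : F 0%nat 0 = 0) :
  forall k x, 0 <= x -> Rabs (F 0%nat x) <= Bd (S k) * T (S k) x.
Proof.
  assert (Hflat : forall n j, (j < n)%nat -> F j 0 = 0).
  { induction n as [|n IH]; intros j Hj; [lia|].
    destruct (Nat.eq_dec j n) as [->|Hne]; [|apply IH; lia].
    destruct (Req_dec (F n 0) 0) as [E|Hc]; [exact E|exfalso].
    set (c := F n 0) in *.
    assert (Ht := taylor F HS n c (Bd (S n)) IH (top F HS Bd Hb n) n (le_n n)).
    rewrite Nat.sub_diag in Ht.
    set (C := Bd (S n)) in *.
    set (D := INR (Factorial.fact (S n)) / (- a) ^ (S n) + C / INR (Factorial.fact (S n))).
    set (q := Rabs c / INR (Factorial.fact n)).
    assert (Hq : 0 < q).
    { unfold q. apply Rdiv_lt_0_compat; [apply Rabs_pos_lt; auto|apply INR_fact_lt_0]. }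
    assert (Hkey : forall x, 0 < x -> q <= D * x).
    { intros x Hx. assert (H1 := Ht x ltac:(lra)). assert (H2 := Hw x Hx).
      assert (H3 := exp_small a (S n) x ha Hx).
      assert (Hxn : 0 < x ^ n) by (apply pow_lt; lra).
      assert (H4 : Rabs c * T n x <= Rabs (F 0%nat x) + C * T (S n) x).
      { replace (Rabs c * T n x) with (Rabs (c * T n x)).
        2:{ rewrite Rabs_mult, (Rabs_pos_eq (T n x)); auto. apply T_nonneg; lra. }
        replace (c * T n x) with (F 0%nat x - (F 0%nat x - c * T n x)) by ring.
        pose proof (Rabs_triang (F 0%nat x) (- (F 0%nat x - c * T n x))).
        rewrite Rabs_Ropp in H. unfold Rminus in *. lra. }
      assert (E5 : C * T (S n) x = C / INR (Factorial.fact (S n)) * x ^ S n).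
      { unfold T. field. apply INR_fact_neq_0. }
      assert (H5 : Rabs c * T n x <= D * x ^ S n).
      { rewrite E5 in H4. unfold D. lra. }
      assert (E6 : Rabs c * T n x = q * x ^ n).
      { unfold T, q. field. apply INR_fact_neq_0. }
      rewrite E6 in H5. simpl pow in H5.
      apply Rmult_le_reg_r with (x ^ n); auto. lra. }
    assert (HD : 0 < 2 * (Rabs D + 1)) by (pose proof (Rabs_pos D); lra).
    set (x := q / (2 * (Rabs D + 1))).
    assert (Hx : 0 < x) by (apply Rdiv_lt_0_compat; lra).
    assert (H1 := Hkey x Hx).
    assert (H2 : D * x <= Rabs D * x) by (apply Rmult_le_compat_r; [lra|apply Rle_abs]).
    assert (H3 : Rabs D * x < q).
    { unfold x. apply Rmult_lt_reg_r with (2 * (Rabs D + 1)); auto.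
      replace (Rabs D * (q / (2 * (Rabs D + 1))) * (2 * (Rabs D + 1))) with (Rabs D * q) by (field; lra).
      pose proof (Rabs_pos D). nra. }
    lra. }
  intros k x Hx.
  assert (Ht := taylor F HS k (F k 0) (Bd (S k)) (Hflat k) (top F HS Bd Hb k) k (le_n k) x Hx).
  rewrite Nat.sub_diag in Ht.
  rewrite (Hflat (S k) k (Nat.lt_succ_diag_r k)) in Ht.
  replace (F 0%nat x - 0 * T k x) with (F 0%nat x) in Ht by ring.
  exact Ht.
Qed.

Lemma cmod_ge_l u v : Rabs u <= cmod u v.
Proof.
  unfold cmod. rewrite <- (sqrt_Rsqr (Rabs u)) by apply Rabs_pos.
  apply sqrt_le_1_alt. rewrite <- Rsqr_abs. unfold Rsqr. nra.
Qed.
Lemma cmod_ge_r u v : Rabs v <= cmod u v.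
Proof.
  unfold cmod. rewrite <- (sqrt_Rsqr (Rabs v)) by apply Rabs_pos.
  apply sqrt_le_1_alt. rewrite <- Rsqr_abs. unfold Rsqr. nra.
Qed.

Theorem lemmaA1 (a b sigma : R) (ha : a < 0) (hsigma : - a < sigma)
  (U V : nat -> R -> R)
  (H0 : forall x, 0 <= x -> U O x = w_re a b x /\ V O x = w_im a b x)
  (HS : forall (k : nat) (x : R), 0 <= x ->
          deriv_nonneg (U k) x (U (S k) x) /\ deriv_nonneg (V k) x (V (S k) x)) :
  forall M : R, exists (k : nat) (x : R), 0 <= x /\
    M < sigma ^ k / (INR (Factorial.fact k)) ^ 2 * cmod (U k x) (V k x).
Proof.
  intros M.
  destruct (classic (exists (k : nat) (x : R), 0 <= x /\
    M < sigma ^ k / (INR (Factorial.fact k)) ^ 2 * cmod (U k x) (V k x))) as [H|Hn];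
    [exact H|exfalso].
  assert (Hle : forall k x, 0 <= x ->
     sigma ^ k / (INR (Factorial.fact k)) ^ 2 * cmod (U k x) (V k x) <= M).
  { intros k x Hx. apply Rnot_lt_le. intro Hlt. apply Hn. exists k, x. auto. }
  assert (Hs : 0 < sigma) by lra.
  set (Bd := fun k => M * INR (Factorial.fact k) ^ 2 / sigma ^ k).
  assert (Hcm : forall k x, 0 <= x -> cmod (U k x) (V k x) <= Bd k).
  { intros k x Hx. assert (H1 := Hle k x Hx).
    assert (Hf := INR_fact_lt_0 k). assert (Hp := pow_lt sigma k Hs).
    assert (Hc : 0 < sigma ^ k / INR (Factorial.fact k) ^ 2).
    { apply Rdiv_lt_0_compat; auto. apply pow_lt; auto. }
    apply Rmult_le_reg_l with (sigma ^ k / INR (Factorial.fact k) ^ 2); auto.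
    unfold Bd. replace (sigma ^ k / INR (Factorial.fact k) ^ 2 *
      (M * INR (Factorial.fact k) ^ 2 / sigma ^ k)) with M by (field; lra).
    exact H1. }
  assert (HM : 0 <= M).
  { assert (H1 := Hle 0%nat 0 (Rle_refl 0)). simpl in H1.
    pose proof (sqrt_pos (U 0%nat 0 * U 0%nat 0 + V 0%nat 0 * V 0%nat 0)).
    unfold cmod in H1. lra. }
  assert (HwU : forall x, 0 < x -> U 0%nat x = exp (a / x) * cos (b / x)).
  { intros x Hx. rewrite (proj1 (H0 x ltac:(lra))). unfold w_re.
    destruct (Rlt_dec 0 x); [reflexivity|lra]. }
  assert (HwV : forall x, 0 < x -> V 0%nat x = exp (a / x) * sin (b / x)).
  { intros x Hx. rewrite (proj2 (H0 x ltac:(lra))). unfold w_im.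
    destruct (Rlt_dec 0 x); [reflexivity|lra]. }
  assert (gU := generic a ha U (fun k x Hx => proj1 (HS k x Hx)) Bd
     (fun k x Hx => Rle_trans _ _ _ (cmod_ge_l _ _) (Hcm k x Hx))).
  assert (gV := generic a ha V (fun k x Hx => proj2 (HS k x Hx)) Bd
     (fun k x Hx => Rle_trans _ _ _ (cmod_ge_r _ _) (Hcm k x Hx))).
  assert (gU' : forall k x, 0 <= x -> Rabs (U 0%nat x) <= Bd (S k) * T (S k) x).
  { apply gU.
    - intros x Hx. rewrite HwU, Rabs_mult, Rabs_pos_eq by (auto; left; apply exp_pos).
      pose proof (COS_bound (b / x)). pose proof (exp_pos (a / x)).
      assert (Rabs (cos (b / x)) <= 1) by (apply Rabs_le; lra). nra.
    - rewrite (proj1 (H0 0 (Rle_refl 0))). unfold w_re.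
      destruct (Rlt_dec 0 0); [lra|reflexivity]. }
  assert (gV' : forall k x, 0 <= x -> Rabs (V 0%nat x) <= Bd (S k) * T (S k) x).
  { apply gV.
    - intros x Hx. rewrite HwV, Rabs_mult, Rabs_pos_eq by (auto; left; apply exp_pos).
      pose proof (SIN_bound (b / x)). pose proof (exp_pos (a / x)).
      assert (Rabs (sin (b / x)) <= 1) by (apply Rabs_le; lra). nra.
    - rewrite (proj2 (H0 0 (Rle_refl 0))). unfold w_im.
      destruct (Rlt_dec 0 0); [lra|reflexivity]. }
  set (d := 1 + a / sigma).
  assert (Hd : 0 < d).
  { unfold d. apply Rmult_lt_reg_r with sigma; auto.
    replace ((1 + a / sigma) * sigma) with (sigma + a) by (field; lra). lra. }
  assert (key : forall k, exp (INR (S k) * d) <= 2 * M * exp 1 * INR (S k)).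
  { intros k. set (m := S k). set (r := INR m).
    assert (Hr : 0 < r) by (apply lt_0_INR; unfold m; lia).
    set (x := sigma / r).
    assert (Hx : 0 < x) by (apply Rdiv_lt_0_compat; lra).
    set (Q := Bd m * T m x).
    assert (HQ : Q * r ^ m = M * INR (Factorial.fact m)).
    { unfold Q, Bd, T, x. unfold Rdiv. rewrite Rpow_mult_distr, pow_inv.
      assert (Hf := INR_fact_neq_0 m). assert (0 < sigma ^ m) by (apply pow_lt; auto).
      assert (0 < r ^ m) by (apply pow_lt; auto).
      field. repeat split; lra. }
    assert (HU := gU' k x ltac:(lra)). assert (HV := gV' k x ltac:(lra)).
    fold m in HU, HV. fold Q in HU, HV.
    assert (Hsq : exp (a / x) * exp (a / x) = U 0%nat x * U 0%nat x + V 0%nat x * V 0%nat x).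
    { rewrite HwU, HwV by auto. pose proof (sin2_cos2 (b / x)). unfold Rsqr in H. nra. }
    assert (He := exp_pos (a / x)).
    assert (EU : U 0%nat x * U 0%nat x = Rabs (U 0%nat x) * Rabs (U 0%nat x)).
    { rewrite <- Rabs_mult. symmetry. apply Rabs_pos_eq. nra. }
    assert (EV : V 0%nat x * V 0%nat x = Rabs (V 0%nat x) * Rabs (V 0%nat x)).
    { rewrite <- Rabs_mult. symmetry. apply Rabs_pos_eq. nra. }
    pose proof (Rabs_pos (U 0%nat x)). pose proof (Rabs_pos (V 0%nat x)).
    assert (HQ2 : exp (a / x) <= 2 * Q) by nra.
    assert (Er : exp (r * d) = exp r * exp (a / x)).
    { rewrite <- exp_plus. f_equal. unfold d, x. field. lra. }
    assert (Hst := stirling_up m ltac:(unfold m; lia)). fold r in Hst.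
    assert (Hrm : 0 < r ^ m) by (apply pow_lt; auto).
    assert (Hexr := exp_pos r).
    apply Rmult_le_reg_r with (r ^ m); auto.
    rewrite Er.
    apply Rle_trans with (exp r * (2 * Q) * r ^ m).
    { apply Rmult_le_compat_r; [lra|]. apply Rmult_le_compat_l; lra. }
    replace (exp r * (2 * Q) * r ^ m) with (2 * M * (INR (Factorial.fact m) * exp r))
      by (transitivity (2 * exp r * (Q * r ^ m)); [rewrite HQ; ring| ring]).
    replace (2 * M * exp 1 * r * r ^ m) with (2 * M * (exp 1 * r * r ^ m)) by ring.
    apply Rmult_le_compat_l; lra. }
  destruct (INR_unbounded (4 * M * exp 1 / (d * d))) as [k Hk].
  assert (H1 := key k).
  assert (H2 := exp_ge_pow (INR (S k) * d) 2).
  assert (Hr : 0 < INR (S k)) by (apply lt_0_INR; lia).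
  assert (H3 : 0 <= INR (S k) * d) by nra.
  specialize (H2 H3). replace (INR (Factorial.fact 2)) with 2 in H2 by (simpl; ring).
  rewrite S_INR in *.
  assert (H4 : (INR k + 1) * d * d <= 4 * M * exp 1).
  { assert (((INR k + 1) * d) ^ 2 / 2 <= 2 * M * exp 1 * (INR k + 1)).
    { lra. }
    apply Rmult_le_reg_r with (INR k + 1); [lra|].
    replace (((INR k + 1) * d) ^ 2 / 2) with ((INR k + 1) * d * d * (INR k + 1) / 2) in H by (simpl; field).
    lra. }
  assert (Hdd : 0 < d * d) by nra.
  assert (H5 : 4 * M * exp 1 / (d * d) * (d * d) = 4 * M * exp 1) by (field; lra).
  assert (INR k * (d * d) > 4 * M * exp 1 / (d * d) * (d * d)).
  { apply Rmult_gt_compat_r; auto. }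
  nra.
Qed.
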